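(* Let $n,m$ be positive integers, not both equal to $1$, with $n\equiv m \pmod 2$. Then \[\sum_{d=0}^{\min(n,m)}(-1)^{d+1}2^{2d-1}\frac{n+m-2d}{n+m-d}\cdot\frac{n+m-2d-1}{n+m-d-1}\binom{n+m-d}{n-d,\,m-d,\,d}\,C\bigl((n+m)/2-d-1\bigr)=\begin{cases}C(n/2-1)\,C(m/2-1)&\text{if } n,m \text{ are even},\\ 0&\text{if } n,m\text{ are odd.}\end{cases}\]
   Context: $C(j)=\frac{1}{j+1}\binom{2j}{j}$ is the $j$-th Catalan number. $\binom{s}{a,\,b,\,c}=\frac{s!}{a!\,b!\,c!}$ is the multinomial coefficient. A summand containing the factor $n+m-2d=0$ (which occurs only for $d=n=m$) is zero, so the undefined value $C(-1)$ never needs to be evaluated. *)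

(* Defs.v *)
From mathcomp Require Import all_boot all_order all_algebra.
Set Implicit Arguments. Unset Strict Implicit. Unset Printing Implicit Defensive.
Import Order.TTheory GRing.Theory Num.Theory.
Local Open Scope ring_scope.

Definition catalan (j : nat) : rat := ('C(j.*2, j))%:R / (j.+1)%:R.

Definition multinom (s a b c : nat) : rat := (s`!)%:R / ((a`! * b`! * c`!)%N)%:R.

(* Main.v *)
Require Import Defs.
From mathcomp Require Import all_boot all_order all_algebra.
From mathcomp Require Import ring lra zify.
Import Order.TTheory GRing.Theory Num.Theory.
Local Open Scope ring_scope.

Definition F (k : nat) : rat := (k`!)%:R.
Lemma FS k : F k.+1 = k.+1%:R * F k.
Proof. by rewrite /F factS natrM. Qed.
Lemma F_neq0 k : F k != 0.
Proof. by rewrite /F pnatr_eq0 -lt0n fact_gt0. Qed.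
Lemma natrS' k : (k.+1)%:R = k%:R + 1 :> rat.
Proof. by rewrite natr1. Qed.
Lemma natrdbl k : (k.*2)%:R = 2 * k%:R :> rat.
Proof. by rewrite -mul2n natrM. Qed.
Ltac nz := repeat (apply/andP; split); try (by rewrite pnatr_eq0 -lt0n fact_gt0); try (by apply: lt0r_neq0; lra); try (by rewrite F_neq0).
Ltac nn := rewrite ?(natrD, natrM, natrS', natrdbl).

Lemma cat_F j : catalan j = F (j.*2) / (F j * F j.+1).
Proof.
rewrite /catalan.
have h := @bin_fact (j.*2) j ltac:(lia).
rewrite (_ : (j.*2 - j = j)%N) in h; last by lia.
have -> : ('C(j.*2, j))%:R = F (j.*2) / (F j * F j) :> rat.
  rewrite /F -h !natrM. field. by rewrite pnatr_eq0 -lt0n fact_gt0.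
have ? := ler0n rat j.
rewrite FS. field. nz.
Qed.

Lemma multinom_F s a b c : multinom s a b c = F s / (F a * F b * F c).
Proof. by rewrite /multinom !natrM. Qed.

Definition summ (n m d : nat) : rat :=
  (-1) ^+ d.+1 * (2 ^+ (2 * d) / 2)
      * (((n + m)%:R - 2 * d%:R) / ((n + m)%:R - d%:R))
      * (((n + m)%:R - 2 * d%:R - 1) / ((n + m)%:R - d%:R - 1))
      * multinom (n + m - d) (n - d) (m - d) d
      * catalan ((n + m)./2 - d - 1).

Definition H (n m s d : nat) : rat :=
  if (d <= n.+2)%N && (d <= s)%N then
    (-1) ^+ d.+1 * (2 ^+ (2 * d) / 2) * F (n + m - 2 * d) * F (n + m - d - 2)
      / (F (n.+2 - d) * F (m - d) * F d * F (s - d) ^+ 2)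
  else 0.

Lemma ler_natR (a b : nat) : (a <= b)%N -> (a%:R <= b%:R :> rat).
Proof. by rewrite ler_nat. Qed.

Lemma termB n m s d : (n.+2 <= m)%N -> (n + m = 2 * s)%N -> (d <= n)%N ->
  summ n m d = (n%:R + 2 - d%:R) * (n%:R + 1 - d%:R) * (s%:R - d%:R) * H n m s d.
Proof.
move=> hm hs hd.
have hs2 : ((n + m)./2 = s)%N by rewrite hs mul2n doubleK.
have [a ea] : exists a, n = (a + d)%N by exists (n - d)%N; lia.
have [j ej] : exists j, s = (j + d).+1 by exists (s - d.+1)%N; lia.
rewrite /summ /H hs2.
rewrite ifT; last by apply/andP; split; lia.
rewrite (_ : (s - d - 1 = j)%N); last by lia.
rewrite (_ : (n + m - d - 2 = j.*2 + d)%N); last by lia.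
rewrite (_ : (n + m - d = (j.*2 + d).+2)%N); last by lia.
rewrite (_ : (n + m - 2 * d = (j.*2).+2)%N); last by lia.
rewrite (_ : (n - d = a)%N); last by lia.
rewrite (_ : (n.+2 - d = a.+2)%N); last by lia.
rewrite (_ : (s - d = j.+1)%N); last by lia.
rewrite multinom_F cat_F !FS.
have ea' : (a%:R : rat) = n%:R - d%:R by rewrite ea natrD addrK.
have ej' : (j%:R : rat) = s%:R - d%:R - 1 by rewrite ej -natr1 natrD; ring.
have em' : (m%:R : rat) = 2 * s%:R - n%:R.
  by apply/eqP; rewrite eq_sym subr_eq -natrM -natrD -hs addnC.
have h1 := @ler_natR _ _ hd. have h2 : (n%:R + 1 <= s%:R :> rat).
  by rewrite natr1; apply: ler_natR; lia.
have h3 := ler0n rat d.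
nn. rewrite ea' ej' em'.
field. nz.
Qed.

Lemma termA n m s d : (0 < n)%N -> (n.+2 <= m)%N -> (n + m = 2 * s)%N -> (d <= n.+2)%N ->
  summ n.+2 m d = 2 * (2 * s%:R + 1 - 2 * d%:R) * (2 * s%:R - d%:R)
                    * (2 * s%:R - d%:R - 1) * H n m s d.
Proof.
move=> hn hm hs hd.
have hs2 : ((n.+2 + m)./2 = s.+1)%N.
  by rewrite (_ : (n.+2 + m = 2 * s.+1)%N) ?mul2n ?doubleK //; lia.
have em' : (m%:R : rat) = 2 * s%:R - n%:R.
  by apply/eqP; rewrite eq_sym subr_eq -natrM -natrD -hs addnC.
case: (leqP d s) => hds; last first.
  rewrite /H ifF; last by apply/negbTE; rewrite negb_and; apply/orP; right; lia.
  have e0 : (n.+2 + m = 2 * d)%N by lia.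
  have e : ((n.+2 + m)%:R - 2 * d%:R = 0 :> rat) by rewrite e0 natrM subrr.
  by rewrite /summ e !(mul0r, mulr0).
have [j ej] : exists j, s = (j + d)%N by exists (s - d)%N; lia.
have [w ew] : exists w, (j.*2 + d = w.+2)%N by exists (j.*2 + d - 2)%N; lia.
rewrite /summ /H hs2.
rewrite ifT; last by apply/andP; split; lia.
rewrite (_ : (s.+1 - d - 1 = j)%N); last by lia.
rewrite (_ : (n.+2 + m - d = w.+4)%N); last by lia.
rewrite (_ : (n + m - d - 2 = w)%N); last by lia.
rewrite (_ : (n + m - 2 * d = j.*2)%N); last by lia.
rewrite (_ : (s - d = j)%N); last by lia.
rewrite multinom_F cat_F !FS.
have ej' : (j%:R : rat) = s%:R - d%:R by rewrite ej natrD addrK.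
have ew' : (w%:R : rat) = 2 * s%:R - d%:R - 2.
  have : ((w.+2)%:R = (j.*2 + d)%:R :> rat) by rewrite ew.
  rewrite natrD natrdbl ej' -!natr1 => h; lra.
have h1 := @ler_natR _ _ hds.
have h3 := ler0n rat j. have h4 := ler0n rat w.
have h5 := ler0n rat d. have h6 := ler0n rat n.
nn. rewrite ew' ej' em'.
field. nz.
Qed.

Lemma ratio n m s d : (0 < n)%N -> (n.+2 <= m)%N -> (n + m = 2 * s)%N ->
  (d.+1 <= n.+2)%N -> (d.+1 <= s)%N ->
  H n m s d.+1 = -4 * (n%:R + 2 - d%:R) * (m%:R - d%:R) * (s%:R - d%:R) ^+ 2
     / ((2 * s%:R - 2 * d%:R) * (2 * s%:R - 2 * d%:R - 1) * (2 * s%:R - d%:R - 2)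
        * (d%:R + 1)) * H n m s d.
Proof.
move=> hn hm hs hd1 hd2.
have em' : (m%:R : rat) = 2 * s%:R - n%:R.
  by apply/eqP; rewrite eq_sym subr_eq -natrM -natrD -hs addnC.
have [j ej] : exists j, s = (j + d).+1 by exists (s - d.+1)%N; lia.
have [a ea] : exists a, n.+2 = (a + d).+1 by exists (n.+1 - d)%N; lia.
have [b eb] : exists b, m = (b + d).+1 by exists (m - d.+1)%N; lia.
have [w ew] : exists w, (j.*2 + d = w.+1)%N by exists (j.*2 + d - 1)%N; lia.
rewrite /H !ifT; try by (apply/andP; split; lia).
rewrite (_ : (n + m - d.+1 - 2 = w)%N); last by lia.
rewrite (_ : (n + m - d - 2 = w.+1)%N); last by lia.
rewrite (_ : (n + m - 2 * d.+1 = j.*2)%N); last by lia.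
rewrite (_ : (n + m - 2 * d = (j.*2).+2)%N); last by lia.
rewrite (_ : (n.+2 - d.+1 = a)%N); last by lia.
rewrite (_ : (n.+2 - d = a.+1)%N); last by lia.
rewrite (_ : (m - d.+1 = b)%N); last by lia.
rewrite (_ : (m - d = b.+1)%N); last by lia.
rewrite (_ : (s - d.+1 = j)%N); last by lia.
rewrite (_ : (s - d = j.+1)%N); last by lia.
rewrite (_ : (2 * d.+1 = (2 * d).+2)%N); last by lia.
rewrite !FS !exprS.
have ea' : (a%:R : rat) = n%:R + 1 - d%:R.
  have : ((n.+2)%:R = ((a + d).+1)%:R :> rat) by rewrite ea.
  rewrite -!natr1 natrD => h; lra.
have eb' : (b%:R : rat) = m%:R - 1 - d%:R.
  have : (m%:R = ((b + d).+1)%:R :> rat) by rewrite {1}eb.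
  rewrite -!natr1 natrD => h; lra.
have ej' : (j%:R : rat) = s%:R - 1 - d%:R.
  have : (s%:R = ((j + d).+1)%:R :> rat) by rewrite {1}ej.
  rewrite -!natr1 natrD => h; lra.
have ew' : (w%:R : rat) = 2 * s%:R - d%:R - 3.
  have : ((w.+1)%:R = (j.*2 + d)%:R :> rat) by rewrite ew.
  rewrite natrD natrdbl ej' -!natr1 => h; lra.
have h1 : (d%:R + 1 <= s%:R :> rat) by rewrite natr1; apply: ler_natR.
have h2 : (2%:R <= s%:R :> rat) by apply: ler_natR; lia.
have h5 := ler0n rat d.
have h6 : (d%:R <= n%:R + 1 :> rat) by rewrite natr1; apply: ler_natR; lia.
have h7 : (d%:R + 1 <= m%:R :> rat) by rewrite natr1; apply: ler_natR; lia.
nn. rewrite ew' ej' ea' eb' em'.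
field. nz.
Qed.

Definition Pc (n m : nat) (x : rat) : rat :=
  let nr := (n%:R : rat) in let mr := (m%:R : rat) in
  4*x - 8*x^+2 - 4*x^+3 + 8*x^+4 + 2*mr*x + 10*mr*x^+2 - 16*mr*x^+3
  - 4*mr^+2*x + 10*mr^+2*x^+2 - 2*mr^+3*x + 4*nr*x + 8*nr*x^+2 - 20*nr*x^+3
  - 8*nr*mr*x + 26*nr*mr*x^+2 - 8*nr*mr^+2*x - 4*nr^+2*x + 16*nr^+2*x^+2
  - 10*nr^+2*mr*x - 4*nr^+3*x.

Definition G n m s d := Pc n m d%:R * H n m s d.

Lemma tele n m s d : (0 < n)%N -> (n.+2 <= m)%N -> (n + m = 2 * s)%N -> (d <= n.+2)%N ->
  (n%:R + 2) * (2 * (2 * s%:R + 1 - 2 * d%:R) * (2 * s%:R - d%:R)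
                    * (2 * s%:R - d%:R - 1) * H n m s d)
  - 4 * (n%:R - 1) * ((n%:R + 2 - d%:R) * (n%:R + 1 - d%:R) * (s%:R - d%:R) * H n m s d)
  = G n m s d.+1 - G n m s d.
Proof.
move=> hn hm hs hd.
have em' : (m%:R : rat) = 2 * s%:R - n%:R.
  by apply/eqP; rewrite eq_sym subr_eq -natrM -natrD -hs addnC.
case: (boolP ((d.+1 <= n.+2)%N && (d.+1 <= s)%N)) => [/andP [h1 h2] | hA].
  rewrite /G (@ratio n m s d hn hm hs h1 h2) /Pc.
  have g1 : (d%:R + 1 <= s%:R :> rat) by rewrite natr1; apply: ler_natR.
  have g2 : (2%:R <= s%:R :> rat) by apply: ler_natR; lia.
  have g5 := ler0n rat d.
  nn. rewrite em'. field. nz.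
have H1 : H n m s d.+1 = 0 by rewrite /H (negbTE hA).
rewrite /G H1 mulr0.
case: (leqP d s) => hds; last first.
  have H0 : H n m s d = 0.
    by rewrite /H ifF //; apply/negbTE; rewrite negb_and; apply/orP; right; lia.
  by rewrite H0 !(mulr0, subrr, oppr0).
have [ed|ed] : d = n.+2 \/ d = s by move: hA; rewrite negb_and => /orP [] ?; lia.
  subst d. rewrite /Pc. nn. rewrite em'. ring.
subst d. rewrite /Pc. rewrite em'. ring.
Qed.

Definition S n m := \sum_(0 <= d < (minn n m).+1) summ n m d.

Lemma recS n m s : (0 < n)%N -> (n.+2 <= m)%N -> (n + m = 2 * s)%N ->
  (n%:R + 2) * S n.+2 m = 4 * (n%:R - 1) * S n m.
Proof.
move=> hn hm hs.
rewrite /S (minn_idPl hm) (minn_idPl (leq_trans (leqnSn n) (ltnW hm))).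
set Af := fun d : nat => 2 * (2 * s%:R + 1 - 2 * d%:R) * (2 * s%:R - d%:R)
                    * (2 * s%:R - d%:R - 1) * H n m s d.
set Bf := fun d : nat =>
  (n%:R + 2 - d%:R) * (n%:R + 1 - d%:R) * (s%:R - d%:R) * H n m s d.
have eA : \sum_(0 <= d < n.+3) summ n.+2 m d = \sum_(0 <= d < n.+3) Af d.
  apply: eq_big_nat => d /andP [_ hd]; exact: termA.
have eB : \sum_(0 <= d < n.+1) summ n m d = \sum_(0 <= d < n.+3) Bf d.
  rewrite [in RHS]big_nat_recr // [in RHS]big_nat_recr //= (_ : Bf n.+2 = 0); last first.
    by rewrite /Bf (_ : (n%:R + 2 - n.+2%:R : rat) = 0) ?(mul0r) //; nn; ring.
  rewrite (_ : Bf n.+1 = 0); last first.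
    by rewrite /Bf (_ : (n%:R + 1 - n.+1%:R : rat) = 0) ?(mulr0, mul0r) //; nn; ring.
  rewrite !addr0.
  apply: eq_big_nat => d /andP [_ hd]; apply: termB => //; lia.
rewrite eA eB.
apply/eqP; rewrite -subr_eq0; apply/eqP.
rewrite !mulr_sumr -sumrB.
rewrite (eq_big_nat _ _ (F2 := fun d => G n m s d.+1 - G n m s d)); last first.
  move=> d /andP [_ hd]; rewrite /Af /Bf; apply: tele => //.
rewrite telescope_sumr // /G.
rewrite (_ : H n m s n.+3 = 0); last by rewrite /H ltnn.
rewrite /Pc; ring.
Qed.

Lemma catS a : (a.+2)%:R * catalan a.+1 = 2 * (2 * a%:R + 1) * catalan a.
Proof.
rewrite !cat_F (_ : (a.+1).*2 = (a.*2).+2)%N; last by lia.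
rewrite !FS. have ? := ler0n rat a. nn. field. nz.
Qed.

Lemma cat0 : catalan 0 = 1.
Proof. by rewrite cat_F /F /= mul1r divr1. Qed.

Lemma S22 : S 2 2 = 1.
Proof.
by rewrite /S /summ /multinom /catalan /= !big_nat_recr //= big_geq //.

Qed.

Lemma base1 m s : (3 <= m)%N -> (1 + m = 2 * s)%N -> S 1 m = 0.
Proof.
move=> hm hs.
rewrite /S (minn_idPl (leq_trans (isT : (1 <= 3)%N) hm)).
rewrite big_nat_recr //= big_nat1.
rewrite (@termB 1 m s 0) // (@termB 1 m s 1) // (@ratio 1 m s 0) //; last by lia.
have em' : (m%:R : rat) = 2 * s%:R - 1.
  have : ((1 + m)%:R = (2 * s)%:R :> rat) by rewrite hs.
  rewrite natrD natrM => h; lra.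
have g2 : (2%:R <= s%:R :> rat) by apply: ler_natR; lia.
nn. rewrite em'. field. nz.
Qed.

Lemma base2 m s : (4 <= m)%N -> (2 + m = 2 * s)%N ->
  S 2 m = catalan (m./2 - 1).
Proof.
move=> hm hs.
rewrite /S (minn_idPl (leq_trans (isT : (2 <= 4)%N) hm)).
rewrite !big_nat_recr //= big_geq // add0r.
rewrite (@termB 2 m s 0) // (@termB 2 m s 1) // (@termB 2 m s 2) //.
rewrite (@ratio 2 m s 1) //; try lia.
rewrite (@ratio 2 m s 0) //; try lia.
have [t et] : exists t, s = t.+2 by exists (s - 2)%N; lia.
have em : m = (t.*2).+2 by lia.
rewrite (_ : (m./2 - 1 = t)%N); last by rewrite em /= doubleK; lia.
rewrite /H /=.
rewrite (_ : (2 + m - 0 - 2 = m)%N); last by lia.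
rewrite (_ : (2 + m - 2 * 0 = (t.*2).+4)%N); last by lia.
rewrite em subn0 et cat_F !FS.
have ? := ler0n rat t.
rewrite muln0 expr0 expr1 (_ : F 0 = 1) //. nn. field. nz.
Qed.

Lemma S_sym n m : S n m = S m n.
Proof.
rewrite /S minnC; apply: eq_bigr => d _.
by rewrite /summ addnC /multinom (mulnC (n - d)`!).
Qed.

Definition R n m : rat := if ~~ odd n then catalan (n./2 - 1) * catalan (m./2 - 1) else 0.

Lemma main_le m n : (0 < n)%N -> (n <= m)%N -> odd n = odd m -> ~ (n = 1%N /\ m = 1%N) ->
  S n m = R n m.
Proof.
elim/ltn_ind: n => n IH hn hnm hpar hne.
have [s hs] : exists s, (n + m = 2 * s)%N.
  exists ((n + m)./2).
  by rewrite -{1}(odd_double_half (n + m)) oddD hpar addbb add0n mul2n.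
case: n => [//|[|[|k]]] in IH hn hnm hpar hne hs *.
- clear IH. have hm3 : (3 <= m)%N.
    case: m hpar hne hnm hs => [|[|[|m]]] //= _ hne; by case: hne.
  by rewrite (@base1 m s) // /R.
- clear IH. have hme : ~~ odd m by rewrite -hpar.
  case: m hme hnm hpar hne hs => [|[|[|[|m]]]] //= _ _ _ _ hs.
    by rewrite S22 /R /= cat0 mulr1.
  by rewrite (@base2 m.+4 s) // /R /= cat0 mul1r.
- have hs' : (k.+1 + m = 2 * s.-1)%N by lia.
  have hIH : S k.+1 m = R k.+1 m.
    apply: IH => //; first by lia.
    + by rewrite -hpar /=; case: (odd k).
    + by case; lia.
  have e := @recS k.+1 m s.-1 isT hnm hs'.
  have nz2 : ((k.+1)%:R + 2 : rat) != 0.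
    by apply: lt0r_neq0; have := ler0n rat k.+1; lra.
  apply: (mulfI nz2); rewrite e hIH /R /=.
  case ek: (odd k) => /=; last by rewrite !mulr0.
  have [a ea] : exists a, k = (a.*2).+1.
    by exists k./2; rewrite -{1}(odd_double_half k) ek.
  subst k. rewrite /= !doubleK !subn1 /=.
  have hc : catalan a.+1 = 2 * (2 * a%:R + 1) / (a%:R + 2) * catalan a.
    have nz3 : ((a.+2)%:R : rat) != 0 by rewrite pnatr_eq0.
    apply: (mulfI nz3); rewrite catS; have ? := ler0n rat a; nn; field; nz.
  have e1 : ((a.*2.+2)%:R : rat) = 2 * a%:R + 2 by rewrite -addn2 natrD natrdbl.
  rewrite hc e1; have ? := ler0n rat a; field; nz.
Qed.

Theorem corollary4p2 (n m : nat) :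
  (0 < n)%N -> (0 < m)%N -> ~ (n = 1%N /\ m = 1%N) -> odd n = odd m ->
  \sum_(0 <= d < (minn n m).+1)
     ((-1) ^+ d.+1 * (2 ^+ (2 * d) / 2)
      * (((n + m)%:R - 2 * d%:R) / ((n + m)%:R - d%:R))
      * (((n + m)%:R - 2 * d%:R - 1) / ((n + m)%:R - d%:R - 1))
      * multinom (n + m - d) (n - d) (m - d) d
      * catalan ((n + m)./2 - d - 1) : rat)
  = if ~~ odd n then catalan (n./2 - 1) * catalan (m./2 - 1) else 0.
Proof.
move=> hn hm hne hpar.
change (S n m = R n m).
case: (leqP n m) => h; first exact: main_le.
have eR : R n m = R m n.
  rewrite /R hpar.
  case: (odd m) => //=.
  by rewrite mulrC.
rewrite S_sym eR.
apply: main_le.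
- exact: hm.
- exact: ltnW.
- by rewrite hpar.
- by move=> [h1 h2]; apply: hne; split.
Qed.
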